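(* Let $c_n$ denote the minimal Colless index among rooted binary trees with $n$ leaves. Then: (1) for every integer $k\geq 0$, $c_{2^k+1}=k$; (2) for every integer $k\geq 1$, $c_{2^k-1}=k-1$; (3) for every integer $k\geq 1$ and every $j\in\{1,\dots,2^{k-1}-1\}$, $c_{2^{k-1}+j}=c_{2^k-j}$.
   Context: A rooted binary tree with $n\geq 2$ leaves is a rooted tree whose root has degree 2 and all other internal nodes have degree 3; for $n=1$ it is a single node. For an internal node $v$ with children $v_1,v_2$, let $\kappa(v_i)$ be the number of leaves descending from $v_i$ ($1$ if a leaf). The Colless index is $\mathcal{C}(T)=\sum_v|\kappa(v_1)-\kappa(v_2)|$ over internal nodes $v$. *)

(* Defs.v *)
From mathcomp Require Import all_boot.
From mathcomp Require Import boolp.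

Set Implicit Arguments. Unset Strict Implicit. Unset Printing Implicit Defensive.

(* A child order is recorded, which is harmless: the Colless index and the
   leaf count are symmetric in the two children, so minimal values agree
   with those over unordered (phylogenetic) trees. *)
Inductive btree : Type :=
| Leaf : btree
| Node : btree -> btree -> btree.

Fixpoint leaves (t : btree) : nat :=
  match t with
  | Leaf => 1
  | Node l r => leaves l + leaves r
  end.

Fixpoint colless (t : btree) : nat :=
  match t with
  | Leaf => 0
  | Node l r => (maxn (leaves l) (leaves r) - minn (leaves l) (leaves r)) + colless l + colless r
  end.

(* A caterpillar with m.+1 leaves: witnesses existence of trees with any
   positive number of leaves. *)
Fixpoint caterpillar (m : nat) : btree :=
  match m with
  | 0 => Leaf
  | m'.+1 => Node (caterpillar m') Leaf
  end.

Lemma leaves_caterpillar m : leaves (caterpillar m) = m.+1.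
Proof. by elim: m => //= m ->; rewrite addn1. Qed.

Lemma ex_colless_value (m : nat) :
  exists c, `[< exists t, leaves t = m.+1 /\ colless t = c >].
Proof.
exists (colless (caterpillar m)); apply/asboolP.
by exists (caterpillar m); rewrite leaves_caterpillar.
Qed.

Definition min_colless_succ (m : nat) : nat := ex_minn (ex_colless_value m).

(* c_n : minimal Colless index among rooted binary trees with n leaves
   (n >= 1; the value at n = 0, where no tree exists, is an unused default 0). *)
Definition min_colless (n : nat) : nat :=
  match n with
  | 0 => 0
  | m.+1 => min_colless_succ m
  end.

(* Main.v *)
Require Import Defs.
From mathcomp Require Import all_boot.
From mathcomp Require Import boolp zify.

Fixpoint fa (fu n : nat) : nat :=
  match fu with
  | 0 => 0
  | fu'.+1 => if n <= 1 then 0 else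
      if odd n then fa fu' (n./2) + fa fu' ((n./2).+1) + 1 else 2 * fa fu' (n./2)
  end.

Lemma fa_fuel fu1 : forall fu2 n, n <= fu1 -> n <= fu2 -> fa fu1 n = fa fu2 n.
Proof.
elim: fu1 => [|f1 IH] [|f2] n //=.
- by case: n.
- by case: n.
- move=> h1 h2; case: ifP => // /negbT; rewrite -ltnNge => hn.
  have e : n./2 = n %/ 2 by rewrite divn2.
  case: ifP => ho.
  + have h3 : 3 <= n.
      by case: n ho hn {h1 h2 e} => [|[|[|]]].
    by rewrite (IH f2 (n./2)) ?(IH f2 (n./2).+1) // e; lia.
  + by rewrite (IH f2 (n./2)) // e; lia.
Qed.

Definition f n := fa n n.

Lemma f_unfold n : 2 <= n ->
  f n = if odd n then f (n./2) + f ((n./2).+1) + 1 else 2 * f (n./2).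
Proof.
move=> hn; rewrite /f; case: n hn => [|m] //= hm.
have e : m.+1./2 = m.+1 %/ 2 by rewrite divn2.
rewrite ifF; last by lia.
have b1 : m.+1./2 <= m by rewrite e; lia.
rewrite (fa_fuel m (m.+1./2) (m.+1./2)) //.
case: ifP => // ho.
have h3 : 3 <= m.+1 by case: m hm ho {e b1} => [|[|]].
rewrite (fa_fuel m (m.+1./2).+1 (m.+1./2).+1) // e; lia.
Qed.

Lemma f0 : f 0 = 0. Proof. by []. Qed.
Lemma f1 : f 1 = 0. Proof. by []. Qed.

Lemma f_even n : f (2 * n) = 2 * f n.
Proof.
case: n => [|n]; first by [].
rewrite f_unfold; last by lia.
have -> : odd (2 * n.+1) = false by rewrite oddM.
have -> : (2 * n.+1)./2 = n.+1 by rewrite -divn2; lia.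
by [].
Qed.

Lemma f_odd n : 1 <= n -> f (2 * n + 1) = f n + f (n + 1) + 1.
Proof.
move=> hn; rewrite f_unfold; last by lia.
have -> : odd (2 * n + 1) = true by rewrite oddD oddM.
have -> : (2 * n + 1)./2 = n by rewrite -divn2; lia.
by rewrite [n + 1]addn1.
Qed.

Lemma par n : exists x, n = 2 * x \/ n = 2 * x + 1.
Proof.
exists n./2; move: (odd_double_half n); case: (odd n) => /= h; [right|left];
rewrite -mul2n in h; lia.
Qed.
Definition dd a b := maxn a b - minn a b.

Lemma key s : forall a b, a + b <= s -> f (a + b) <= f a + f b + dd a b.
Proof.
rewrite /dd.
elim: s => [|s IH] a b hs.
  have a0 : a = 0 by lia. have b0 : b = 0 by lia. by subst.
have [->|an0] := eqVneq a 0; first by rewrite add0n f0; lia.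
have [->|bn0] := eqVneq b 0; first by rewrite addn0 f0; lia.
have EO : forall x y, 1 <= x -> 2 * x + (2 * y + 1) <= s.+1 ->
   f (2 * x + (2 * y + 1)) <= f (2 * x) + f (2 * y + 1) +
      (maxn (2 * x) (2 * y + 1) - minn (2 * x) (2 * y + 1)).
  move=> x y hx hxy.
  have -> : 2 * x + (2 * y + 1) = 2 * (x + y) + 1 by lia.
  rewrite f_odd; last by lia.
  rewrite f_even.
  have [y0|yp] : y = 0 \/ 1 <= y by lia.
    subst y; rewrite muln0 add0n f1 !addn0.
    have h1 := IH x 1 ltac:(lia). rewrite f1 in h1.
    lia.
  rewrite f_odd //.
  have h1 := IH x y ltac:(lia).
  have h2 := IH x (y + 1) ltac:(lia).
  rewrite addnA in h2.
  lia.
have [x [ha|ha]] := par a; have [y [hb|hb]] := par b; subst a b.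
- have -> : 2 * x + 2 * y = 2 * (x + y) by lia.
  rewrite !f_even.
  have h1 := IH x y ltac:(lia). lia.
- apply: EO => //; lia.
- rewrite addnC maxnC minnC [f (2 * x + 1) + _]addnC.
  apply: EO => //; lia.
- have -> : 2 * x + 1 + (2 * y + 1) = 2 * (x + y + 1) by lia.
  rewrite f_even.
  have [x0|xp] : x = 0 \/ 1 <= x by lia.
  + have [y0|yp] : y = 0 \/ 1 <= y by lia.
    * subst; rewrite ?addn0 ?muln0 ?add0n. lia.
    * subst x; rewrite muln0 add0n f1 add0n f_odd //.
      have h1 := IH y 1 ltac:(lia). rewrite f1 in h1. lia.
  + have [y0|yp] : y = 0 \/ 1 <= y by lia.
    * subst y; rewrite muln0 add0n f1 addn0 f_odd //.
      have h1 := IH x 1 ltac:(lia). rewrite f1 in h1. lia.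
    * rewrite !f_odd //.
      have h1 := IH x (y + 1) ltac:(lia).
      have h2 := IH (x + 1) y ltac:(lia).
      have e1 : x + (y + 1) = x + y + 1 by lia.
      have e2 : x + 1 + y = x + y + 1 by lia.
      rewrite e1 in h1; rewrite e2 in h2. lia.
Qed.

Lemma lower t : f (leaves t) <= colless t.
Proof.
elim: t => //= l hl r hr.
have := @key _ (leaves l) (leaves r) (leqnn (leaves l + leaves r)). rewrite /dd; lia.
Qed.

Lemma ex_bal N : forall n, 1 <= n <= N -> exists t, leaves t = n /\ colless t = f n.
Proof.
elim: N => [|N IH] n hn; first by lia.
have [n1|n2] : n = 1 \/ 2 <= n by lia.
  by subst; exists Leaf.
have [x [hx|hx]] := par n; subst n.
- have [t [lt ct]] := IH x ltac:(lia).
  exists (Node t t) => /=; rewrite lt ct f_even; split; first by lia.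
  rewrite maxnn minnn subnn; lia.
- have [t1 [l1 c1]] := IH (x + 1) ltac:(lia).
  have [t2 [l2 c2]] := IH x ltac:(lia).
  exists (Node t1 t2) => /=; rewrite l1 l2 c1 c2 f_odd; last by lia.
  split; first by lia.
  have -> : maxn (x + 1) x - minn (x + 1) x = 1 by lia.
  lia.
Qed.

Lemma mc n : 1 <= n -> min_colless n = f n.
Proof.
case: n => // m _; rewrite /= /min_colless_succ.
case: ex_minnP => c /asboolP [t [lt ct]] hmin.
apply/eqP; rewrite eqn_leq; apply/andP; split.
- have [t' [l' c']] := ex_bal m.+1 m.+1 ltac:(lia).
  apply: hmin; apply/asboolP; by exists t'.
- rewrite -ct -lt; exact: lower.
Qed.

Lemma fpow k : f (2 ^ k) = 0.
Proof. elim: k => // k IH; by rewrite expnS f_even IH. Qed.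

Lemma sym k : forall j, j <= 2 ^ k -> f (2 ^ k + j) = f (2 ^ (k + 1) - j).
Proof.
elim: k => [|k IH] j.
  by case: j => [|[|]].
rewrite addSn !expnS.
have hp : 1 <= 2 ^ k by rewrite expn_gt0.
move: (IH) ; rewrite addn1 expnS => IH' hj.
have [i [hi|hi]] := par j; subst j.
- have -> : 2 * 2 ^ k + 2 * i = 2 * (2 ^ k + i) by lia.
  have -> : 2 * (2 * 2 ^ k) - 2 * i = 2 * (2 * 2 ^ k - i) by lia.
  by rewrite !f_even IH'; last by lia.
- have -> : 2 * 2 ^ k + (2 * i + 1) = 2 * (2 ^ k + i) + 1 by lia.
  have -> : 2 * (2 * 2 ^ k) - (2 * i + 1) = 2 * (2 * 2 ^ k - i - 1) + 1 by lia.
  rewrite !f_odd; try lia.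
  have -> : 2 * 2 ^ k - i - 1 + 1 = 2 * 2 ^ k - i by lia.
  rewrite IH'; last by lia.
  have -> : 2 ^ k + i + 1 = 2 ^ k + (i + 1) by lia.
  rewrite IH'; last by lia.
  have -> : 2 * 2 ^ k - (i + 1) = 2 * 2 ^ k - i - 1 by lia.
  lia.
Qed.

Lemma part1 k : f (2 ^ k + 1) = k.
Proof.
elim: k => // k IH.
rewrite expnS f_odd ?expn_gt0 // fpow IH; lia.
Qed.

Lemma part2 k : f (2 ^ k.+1 - 1) = k.
Proof.
elim: k => // k IH.
have hp : 1 <= 2 ^ k.+1 by rewrite expn_gt0.
have -> : 2 ^ k.+2 - 1 = 2 * (2 ^ k.+1 - 1) + 1 by rewrite (expnS 2 k.+1); lia.
rewrite f_odd; last first.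
  rewrite (expnS 2 k); have : 0 < 2 ^ k by rewrite expn_gt0.
  lia.
rewrite IH.
have -> : 2 ^ k.+1 - 1 + 1 = 2 ^ k.+1 by lia.
rewrite fpow; lia.
Qed.

Theorem proposition1 :
  (forall k : nat, min_colless (2 ^ k + 1) = k) /\
  (forall k : nat, 1 <= k -> min_colless (2 ^ k - 1) = k - 1) /\
  (forall k j : nat, 1 <= k -> 1 <= j -> j <= 2 ^ (k - 1) - 1 ->
     min_colless (2 ^ (k - 1) + j) = min_colless (2 ^ k - j)).
Proof.
split; [|split].
- move=> k; rewrite mc ?part1 //; lia.
- case=> // k _. have hp : 0 < 2 ^ k by rewrite expn_gt0. rewrite mc ?part2; first lia.
  rewrite expnS; lia.
- case=> // k j _ hj hjk.
  have hp : 0 < 2 ^ k by rewrite expn_gt0.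
  rewrite subSS subn0 in hjk *.
  rewrite mc; last by lia.
  rewrite mc; last by rewrite expnS; lia.
  rewrite sym; last by lia.
  by rewrite addn1.
Qed.
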